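(* Let $G_1$ and $G_2$ be two vertex-disjoint 2-edge-colored graphs with Hamiltonian alternating cycles $C_1=x_0x_1\cdots x_{2n-1}x_0$ and $C_2=y_0y_1\cdots y_{2m-1}y_0$, respectively, and let $G\in G_1\oplus G_2$. Suppose there is no good pair in $G$ (between $C_1$ and $C_2$), and that for each $i\in\{1,2\}$ there is a vertex of $C_i$ which is non-singular with respect to $C_{3-i}$. Then $G$ is vertex alternating-pancyclic.
   Context: All graphs are simple, with edges colored red or blue. An alternating cycle is a cycle in which consecutive edges have different colors; a Hamiltonian alternating cycle of a graph is an alternating cycle through all its vertices. A 2-edge-colored graph of order $2N$ is vertex alternating-pancyclic if for every vertex $v$ and every $k\in\{2,\dots,N\}$ it contains an alternating cycle of length $2k$ through $v$. For vertex-disjoint 2-edge-colored graphs $G_1,G_2$, the colored generalized sum $G_1\oplus G_2$ is the set of 2-edge-colored graphs $G$ with $V(G)=V(G_1)\cup V(G_2)$, $G\langle V(G_i)\rangle=G_i$ with the same coloring, and exactly one edge (of arbitrary fixed color) between each $u\in V(G_1)$ and $w\in V(G_2)$; these latter edges are the exterior edges. For $v$ on an alternating cycle $C$, $v^r$ (resp. $v^b$) is the neighbor of $v$ on $C$ with $vv^r$ red (resp. $vv^b$ blue). For an exterior edge $vw$ with $v\in V(C_1)$, $w\in V(C_2)$: if $vw$ is red, $vw,v^rw^r$ is a good pair if $v^rw^r$ is red; if $vw$ is blue, $vw,v^bw^b$ is a good pair if $v^bw^b$ is blue. A vertex $v\in V(C_i)$ is singular with respect to $C_{3-i}$ if all edges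 between $v$ and $V(C_{3-i})$ have the same color, and non-singular otherwise. *)

(* Defs.v *)
From mathcomp Require Import all_boot.
Set Implicit Arguments. Unset Strict Implicit. Unset Printing Implicit Defensive.

(* A 2-edge-colored simple graph on a finite vertex type V is given by an
   adjacency relation [adj] (assumed symmetric and irreflexive) and a colouring
   [col] of pairs (assumed symmetric); [col x y = true] means the edge xy is red,
   [false] means blue. *)
Section AltCycles.
Variables (V : finType) (adj : rel V) (col : V -> V -> bool).

Definition simple_2ec_graph : Prop :=
  irreflexive adj /\ symmetric adj /\ (forall x y, col x y = col y x).

Definition alt_cycle (s : seq V) : bool :=
  [&& s != [::], uniq s, cycle adj s &
      all (fun x => col (prev s x) x != col x (next s x)) s].

Definition vertex_alt_pancyclic : Prop :=
  forall (v : V) (k : nat), 2 <= k -> 2 * k <= #|V| ->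
    exists s : seq V, [/\ alt_cycle s, size s = 2 * k & v \in s].

(* v^c for v on the cycle s: the neighbour of v on s joined to v by an edge
   of colour c (v^r for c = true, v^b for c = false). *)
Definition cnbr (s : seq V) (c : bool) (v : V) : V :=
  if col v (next s v) == c then next s v else prev s v.

Definition has_good_pair (C1 C2 : seq V) : Prop :=
  exists v w, [/\ v \in C1, w \in C2 &
    col (cnbr C1 (col v w) v) (cnbr C2 (col v w) w) = col v w].

Definition non_singular (v : V) (C : seq V) : Prop :=
  exists w1 w2, [/\ w1 \in C, w2 \in C & col v w1 != col v w2].

End AltCycles.

(* Main.v *)
Require Import Defs.
From mathcomp Require Import all_boot zify.
From Stdlib Require Import Classical.
Set Implicit Arguments. Unset Strict Implicit. Unset Printing Implicit Defensive.

Lemma next_nth_mod (T : eqType) (x0 : T) (s : seq T) i :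
  uniq s -> i < size s -> next s (nth x0 s i) = nth x0 s (i.+1 %% size s).
Proof.
move=> us ltis; rewrite next_nth mem_nth // index_uniq //.
case: s us ltis => [|y p] //= us ltis.
rewrite ltnS leq_eqVlt in ltis; case/orP: ltis => [/eqP ->|lt].
  by rewrite modnn /= nth_default.
by rewrite modn_small ?ltnS //= (set_nth_default x0).
Qed.

Lemma prev_nth_mod (T : eqType) (x0 : T) (s : seq T) i :
  uniq s -> i < size s -> prev s (nth x0 s i) = nth x0 s ((i + (size s).-1) %% size s).
Proof.
move=> us ltis; rewrite prev_nth mem_nth //.
case: s us ltis => [|y p] //= /andP[ynp up] ltis.
case: i ltis => [|j] ltis /=.
  by rewrite add0n modn_small // memNindex // (set_nth_default x0).
rewrite ltnS in ltis.
rewrite index_uniq // addSn -addnS modnDr modn_small //; last exact: ltnW.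
by rewrite (set_nth_default x0) //= ltnW.
Qed.

Lemma alt_cycle_nthP (V : finType) (adj : rel V) (col : V -> V -> bool) (s : seq V) (x0 : V) :
  alt_cycle adj col s <->
  [/\ s != [::], uniq s,
      (forall i, i < size s -> adj (nth x0 s i) (nth x0 s (i.+1 %% size s))) &
      (forall i, i < size s -> col (nth x0 s ((i + (size s).-1) %% size s)) (nth x0 s i)
                         != col (nth x0 s i) (nth x0 s (i.+1 %% size s)))].
Proof.
rewrite /alt_cycle; split.
  case/and4P=> sn us cs als; split=> // i lti.
    rewrite -next_nth_mod //; apply: next_cycle cs _; exact: mem_nth.
  rewrite -next_nth_mod // -prev_nth_mod //.
  by move/all_nthP: als => /(_ x0 i lti).
case=> sn us ha hc; apply/and4P; split=> //.
  case: s sn us ha hc => [|y p] //= _ us ha hc.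
  apply/(pathP x0) => i; rewrite size_rcons => lti.
  have := ha i lti; rewrite -rcons_cons nth_rcons /= lti.
  rewrite nth_rcons.
  rewrite ltnS leq_eqVlt in lti; case/orP: lti => [/eqP ->|lt].
    by rewrite modnn ltnn eqxx.
  by rewrite modn_small ?ltnS // lt.
apply/(all_nthP x0) => i lti.
by rewrite next_nth_mod // prev_nth_mod // hc.
Qed.

Lemma alt_cycle_build (V : finType) (adj : rel V) (col : V -> V -> bool) (z : nat -> V) L beta :
  ~~ odd L -> 0 < L -> {in gtn L &, injective z} ->
  (forall i, i < L -> adj (z i) (z (i.+1 %% L))) ->
  (forall i, i < L -> col (z i) (z (i.+1 %% L)) = odd i (+) beta) ->
  alt_cycle adj col (mkseq z L).
Proof.
move=> eL L0 zi ha hc; apply/(alt_cycle_nthP _ _ _ (z 0)); rewrite size_mkseq.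
have Hn : forall i, i < L -> nth (z 0) (mkseq z L) i = z i by move=> i; apply: nth_mkseq.
have ltm : forall i, i %% L < L by move=> i; rewrite ltn_mod.
split.
- by case: L eL L0 {zi ha hc Hn ltm}.
- exact/mkseq_uniqP.
- by move=> i lti; rewrite !Hn //; apply: ha.
move=> i lti; rewrite !Hn //.
set j := (i + L.-1) %% L.
have ltj : j < L by apply: ltm.
have ej : j.+1 %% L = i.
  rewrite /j -addn1 modnDml -addnA addn1 prednK // modnDr modn_small //.
have := hc j ltj; rewrite ej => ->; rewrite hc //.
have : odd j != odd i.
  rewrite /j; case: i lti {ej ltj j} => [|i] lti.
    rewrite add0n modn_small; last lia.
    lia.
  rewrite addSn -addnS prednK // modnDr modn_small; last by lia.
  lia.
lia.
Qed.

Record cyc (V : finType) (adj : rel V) (col : V -> V -> bool) (n : nat) (X : nat -> V) : Prop := Cyc {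
  cyc_n : 1 < n;
  cyc_per : forall i, X (i + 2 * n) = X i;
  cyc_inj : forall i j, X i = X j -> i = j %[mod 2 * n];
  cyc_adj : forall i, adj (X i) (X i.+1);
  cyc_col : forall i, col (X i) (X i.+1) = ~~ odd i }.

Lemma cyc_perM V adj col n X : @cyc V adj col n X -> forall i t, X (i + 2 * n * t) = X i.
Proof.
move=> C i t; elim: t => [|t IH]; first by rewrite muln0 addn0.
by rewrite mulnS addnCA addnC (cyc_per C).
Qed.

Lemma cyc_mod V adj col n X : @cyc V adj col n X -> forall i, X (i %% (2 * n)) = X i.
Proof.
move=> C i; rewrite {2}(divn_eq i (2 * n)) addnC [_ %/ _ * _]mulnC.
by rewrite (cyc_perM C).
Qed.

Lemma cyc_win V adj col n X c i j : @cyc V adj col n X -> i < 2 * n -> j < 2 * n ->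
  X (c + i) = X (c + j) -> i = j.
Proof.
move=> C li lj /(cyc_inj C)/eqP; rewrite eqn_modDl.
by rewrite !modn_small // => /eqP.
Qed.

Definition zts (V : Type) (X Y : nat -> V) c b p i := if i < p then X (c + i) else Y (b + (i - p)).

Lemma two_seg (V : finType) (adj : rel V) (col : V -> V -> bool) n m X Y c p q b :
  simple_2ec_graph adj col -> cyc adj col n X -> cyc adj col m Y ->
  (forall i j, X i != Y j) -> (forall i j, adj (X i) (Y j)) ->
  0 < p <= 2 * n -> 0 < q <= 2 * m ->
  odd (c + p.-1 + b) -> col (X (c + p.-1)) (Y b) = ~~ odd (c + p.-1) ->
  odd (c + (b + q.-1)) -> col (X c) (Y (b + q.-1)) = odd c ->
  alt_cycle adj col (mkseq (zts X Y c b p) (p + q)).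
Proof.
move=> [_ [asym csym]] CX CY XY XYa /andP[p0 pn] /andP[q0 qm] o1 c1 o2 c2.
have eL : ~~ odd (p + q) by lia.
apply: (alt_cycle_build _ (beta := ~~ odd c)) => //; first by lia.
- move=> i j; rewrite !inE /zts => li lj.
  case: ifP => ip; case: ifP => jp.
  + by move=> e; apply: (cyc_win CX _ _ e); lia.
  + by move=> e; move: (XY (c + i) (b + (j - p))); rewrite e eqxx.
  + by move=> e; move: (XY (c + j) (b + (i - p))); rewrite e eqxx.
  + move=> e; have := cyc_win CY _ _ e; lia.
- move=> i li; rewrite /zts.
  have [e|ne] := eqVneq i.+1 (p + q).
    have -> : i.+1 %% (p + q) = 0 by rewrite e modnn.
    have -> : (i < p) = false by lia.
    rewrite p0 addn0 asym.
    have -> : b + (i - p) = b + q.-1 by lia.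
    by [].
  rewrite modn_small; last by lia.
  case: ifP => ip; case: ifP => ip1.
  + by rewrite addnS; exact: (cyc_adj CX (c + i)).
  + have -> : c + i = c + p.-1 by lia.
    have -> : i.+1 - p = 0 by lia.
    by rewrite addn0.
  + lia.
  + have -> : i.+1 - p = (i - p).+1 by lia.
    by rewrite addnS; exact: (cyc_adj CY (b + (i - p))).
- move=> i li; rewrite /zts.
  have [e|ne] := eqVneq i.+1 (p + q).
    have -> : i.+1 %% (p + q) = 0 by rewrite e modnn.
    have -> : (i < p) = false by lia.
    rewrite p0 addn0 csym.
    have -> : b + (i - p) = b + q.-1 by lia.
    rewrite c2; lia.
  rewrite modn_small; last by lia.
  case: ifP => ip; case: ifP => ip1.
  + rewrite addnS (cyc_col CX); lia.
  + have -> : c + i = c + p.-1 by lia.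
    have -> : i.+1 - p = 0 by lia.
    rewrite addn0 c1; lia.
  + lia.
  + have -> : i.+1 - p = (i - p).+1 by lia.
    rewrite addnS (cyc_col CY); lia.
Qed.

Definition zH (V : Type) (X Y : nat -> V) n b q1 i :=
  if i < 2 then X i else if i < 2 + q1 then Y (b + (i - 2))
  else if i < 2 * n + q1 then X (i - q1) else Y (b + (i - 2 * n)).

Ltac adj_step CX CY asym XYa :=
  match goal with
  | |- is_true (_ (?X ?a) (?X ?b)) =>
      first [exact: (cyc_adj CX a) | exact: (cyc_adj CY a) |
      (have -> : b = a.+1 by lia); first [exact: (cyc_adj CX a) | exact: (cyc_adj CY a)]]
  | |- is_true (_ (?Y ?a) (?X ?b)) => rewrite asym; exact: XYa
  | |- is_true (_ (?X ?a) (?Y ?b)) => exact: XYa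
  end.

Ltac col_step CX CY csym :=
  match goal with
  | |- _ (?X ?a) (?X ?b) = _ =>
      first [rewrite (cyc_col CX); lia | rewrite (cyc_col CY); lia |
      (have -> : b = a.+1 by lia); first [rewrite (cyc_col CX) | rewrite (cyc_col CY)]; lia]
  | H : ?col (?X ?a') (?Y ?b') = _ |- ?col (?X ?a) (?Y ?b) = _ =>
      (have -> : col (X a) (Y b) = col (X a') (Y b') by congr (col (X _) (Y _)); lia);
      rewrite H; lia
  | H : ?col (?X ?a') (?Y ?b') = _ |- ?col (?Y ?b) (?X ?a) = _ =>
      rewrite csym;
      (have -> : col (X a) (Y b) = col (X a') (Y b') by congr (col (X _) (Y _)); lia);
      rewrite H; lia
  end.

Ltac inj_step CX CY XY :=
  match goal with
  | |- ?X ?a = ?X ?b -> _ =>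
      first [ move/(cyc_inj CX)/eqP; rewrite ?eqn_modDl !modn_small; lia
            | move/(cyc_inj CY)/eqP; rewrite ?eqn_modDl !modn_small; lia ]
  | |- ?X ?a = ?Y ?b -> _ => by move=> /eqP; rewrite (negbTE (XY a b))
  | |- ?Y ?a = ?X ?b -> _ => by move=> /esym/eqP; rewrite (negbTE (XY b a))
  end.

Lemma ham (V : finType) (adj : rel V) (col : V -> V -> bool) n m X Y b q1 :
  simple_2ec_graph adj col -> cyc adj col n X -> cyc adj col m Y ->
  (forall i j, X i != Y j) -> (forall i j, adj (X i) (Y j)) ->
  ~~ odd b -> ~~ odd q1 -> 2 <= q1 <= 2 * m - 2 ->
  col (X 1) (Y b) = false -> col (X 2) (Y (b + q1.-1)) = false ->
  col (X (2 * n).-1) (Y (b + q1)) = false -> col (X 0) (Y (b + (2 * m).-1)) = false ->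
  alt_cycle adj col (mkseq (zH X Y n b q1) (2 * n + 2 * m)).
Proof.
move=> [_ [asym csym]] CX CY XY XYa eb eq1 /andP[q1a q1b] h1 h2 h3 h4.
have n2 := cyc_n CX; have m2 := cyc_n CY.
apply: (alt_cycle_build _ (beta := true)).
- lia.
- lia.
- move=> i j; rewrite !inE /zH => li lj.
  repeat (case: ifP => ?); try lia; inj_step CX CY XY.
- move=> i li.
  have [e|ne] := eqVneq i.+1 (2 * n + 2 * m).
    have -> : i.+1 %% (2 * n + 2 * m) = 0 by rewrite e modnn.
    have -> : zH X Y n b q1 0 = X 0 by [].
    rewrite /zH.
    repeat (case: ifP => ?); try lia; adj_step CX CY asym XYa.
  rewrite modn_small; last by lia.
  rewrite /zH.
  repeat (case: ifP => ?); try lia; adj_step CX CY asym XYa.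
- move=> i li.
  have [e|ne] := eqVneq i.+1 (2 * n + 2 * m).
    have -> : i.+1 %% (2 * n + 2 * m) = 0 by rewrite e modnn.
    have -> : zH X Y n b q1 0 = X 0 by [].
    rewrite /zH.
    repeat (case: ifP => ?); try lia; col_step CX CY csym.
  rewrite modn_small; last by lia.
  rewrite /zH.
  repeat (case: ifP => ?); try lia; col_step CX CY csym.
Qed.

Lemma trans_ex (h : nat -> bool) N s1 s2 : 0 < N ->
  (forall s, odd s -> h (s + 2 * N) = h s) -> odd s1 -> odd s2 -> h s1 -> ~~ h s2 ->
  exists sg, [/\ odd sg, h sg & ~~ h (sg + 2)].
Proof.
move=> N0 hp o1 o2 h1 h2.
have hpm : forall t s, odd s -> h (s + 2 * N * t) = h s.
  elim=> [|t IH] s os; first by rewrite muln0 addn0.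
  rewrite mulnS addnCA addnC hp ?IH //; lia.
have key : forall t, h (s1 + 2 * t) = false -> exists sg, [/\ odd sg, h sg & ~~ h (sg + 2)].
  elim=> [|t IH]; first by rewrite muln0 addn0 h1.
  case e: (h (s1 + 2 * t)) => hn.
    exists (s1 + 2 * t); split => //; first lia.
    by rewrite -addnA -mulnSr hn.
  exact: IH.
have hs : s1 <= N * s1 by rewrite leq_pmull.
apply: (key ((s2 + 2 * N * s1 - s1) %/ 2)).
have -> : s1 + 2 * ((s2 + 2 * N * s1 - s1) %/ 2) = s2 + 2 * N * s1 by lia.
by rewrite hpm //; apply/negbTE.
Qed.

Lemma choose_pq n m k : 1 < n -> 1 < m -> 1 < k -> k < n + m ->
  exists p q u v, [/\ 0 < p <= 2 * n, 0 < q <= 2 * m, p + q = 2 * k &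
     q + 2 * gcdn n m * u = p + 2 + 2 * gcdn n m * v].
Proof.
move=> n1 m1 k1 km.
set g := gcdn n m.
have g0 : 0 < g by rewrite gcdn_gt0; lia.
have gn : g <= n by apply: dvdn_leq; [lia | apply: dvdn_gcdl].
have gm : g <= m by apply: dvdn_leq; [lia | apply: dvdn_gcdr].
have [n' en] : exists n', n = n' * g by exists (n %/ g); rewrite divnK // dvdn_gcdl.
have [m' em] : exists m', m = m' * g by exists (m %/ g); rewrite divnK // dvdn_gcdr.
set r := n + m - 1 - k.
case: (leqP (2 * m) k) => hkm.
  set r0 := r %% g; set r1 := r %/ g.
  have er : r = r1 * g + r0 by apply: divn_eq.
  have r0g : r0 < g by rewrite ltn_mod.
  have r0r : r0 <= r by apply: leq_mod.
  exists (2 * k - (2 * m - r0)), (2 * m - r0), n', (m' + r1); split; lia.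
case: (leqP (2 * n + 2) k) => hkn.
  set r0 := (r + 2) %% g; set r1 := (r + 2) %/ g.
  have er : r + 2 = r1 * g + r0 by apply: divn_eq.
  have r0g : r0 < g by rewrite ltn_mod.
  have r0r : r0 <= r + 2 by apply: leq_mod.
  exists (2 * n - r0), (2 * k - (2 * n - r0)), (n' + r1), m'; split; lia.
exists k.-1, k.+1, 0, 0; split; lia.
Qed.

Lemma mem_mkseq_at (T : eqType) (z : nat -> T) L i : i < L -> z i \in mkseq z L.
Proof. by move=> li; rewrite -(nth_mkseq (z 0) z li) mem_nth // size_mkseq. Qed.

Lemma core (V : finType) (adj : rel V) (col : V -> V -> bool) n m X Y :
  simple_2ec_graph adj col -> cyc adj col n X -> cyc adj col m Y ->
  (forall i j, X i != Y j) -> (forall i j, adj (X i) (Y j)) ->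
  (forall i j, ~~ odd (i + j) ->
     col (X i) (Y j.+1) (+) odd i = col (X i.+1) (Y j) (+) odd i.+1) ->
  (exists i j i' j', [/\ odd (i + j), odd (i' + j') &
     col (X i) (Y j) (+) odd i != col (X i') (Y j') (+) odd i']) ->
  forall c k, 1 < k <= n + m ->
  exists s, [/\ alt_cycle adj col s, size s = 2 * k & X c \in s].
Proof.
move=> sg CX CY XY XYa Godd NC c k /andP[k1 kn].
have n2 := cyc_n CX; have m2 := cyc_n CY.
pose G i j := col (X i) (Y j) (+) odd i.
have Tinv : forall t i, odd (i + t) -> G i t = G (i + t) 0.
  elim=> [|t IH] i o; first by rewrite addn0.
  rewrite /G Godd; last by lia.
  have := IH i.+1; rewrite /G addSnnS => -> //; lia.
pose H s := G s 0.
have HpX : forall s, H (s + 2 * n) = H s.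
  by move=> s; rewrite /H /G (cyc_per CX); congr (_ (+) _); lia.
have HpY : forall s, odd s -> H (s + 2 * m) = H s.
  move=> s os; rewrite /H -Tinv; last by lia.
  by rewrite /G -(add0n (2 * m)) (cyc_per CY).
have HpXm : forall t s, H (s + 2 * n * t) = H s.
  elim=> [|t IH] s; first by rewrite muln0 addn0.
  by rewrite mulnS addnCA addnC HpX IH.
have HpYm : forall t s, odd s -> H (s + 2 * m * t) = H s.
  elim=> [|t IH] s os; first by rewrite muln0 addn0.
  rewrite mulnS addnCA addnC HpY ?IH //; lia.
set g := gcdn n m.
have g0 : 0 < g by rewrite gcdn_gt0; lia.
have Hg1 : forall s, odd s -> H (s + 2 * g) = H s.
  move=> s os; case: (Bezoutl m (_ : 0 < n)) => [|a _ dv]; first lia.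
  rewrite -/g in dv; have eK := divnK dv.
  rewrite -(HpYm a); last by lia.
  have -> : s + 2 * g + 2 * m * a = s + 2 * n * ((g + a * m) %/ n).
    move: eK; set K := (g + a * m) %/ n; lia.
  by rewrite HpXm.
have Hg : forall t s, odd s -> H (s + 2 * g * t) = H s.
  elim=> [|t IH] s os; first by rewrite muln0 addn0.
  rewrite mulnS addnCA addnC Hg1 ?IH //; lia.
have hp : forall s, odd s -> H (s + 2 * n) = H s by move=> s _; apply: HpX.
have n0 : 0 < n by lia.
have [sg1 [os1 hs1 hs2]] : exists sg, [/\ odd sg, H sg & ~~ H (sg + 2)].
  case: NC => i [j [i' [j' [o1 o2 ne]]]].
  have ne' : H (i + j) != H (i' + j').
    by rewrite /H -(Tinv j i o1) -(Tinv j' i' o2).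
  move: ne'; case e: (H (i + j)) => ne'.
    by apply: (trans_ex n0 hp o1 o2) => //; move: ne'; case: (H (i' + j')).
  by apply: (trans_ex n0 hp o2 o1); [move: ne'; case: (H (i' + j')) | rewrite e].
have [tau [ot ht1 ht2]] : exists sg, [/\ odd sg, ~~ H sg & H (sg + 2)].
  have os2 : odd (sg1 + 2) by lia.
  have hp' : forall s, odd s -> ~~ H (s + 2 * n) = ~~ H s by move=> s _; rewrite HpX.
  have hh : ~~ ~~ H sg1 by rewrite negbK.
  have [x [ox hx1 hx2]] := trans_ex (h := fun s => ~~ H s) n0 hp' os2 os1 hs2 hh.
  by exists x; split => //; rewrite negbK in hx2.
have GH : forall i j, odd (i + j) -> col (X i) (Y j) = H (i + j) (+) odd i.
  move=> i j o; rewrite /H -Tinv // /G; by case: (col _ _); case: (odd i).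
case: (ltnP k (n + m)) => hk.
  have [p [q [u [v [/andP[p0 pn] /andP[q0 qm] pq ec]]]]] := choose_pq n2 m2 k1 hk.
  have cpg : c + p <= g * (c + p) by rewrite leq_pmull.
  set b := sg1 + 2 * g * (c + p) - (c + p.-1).
  have eb : c + p.-1 + b = sg1 + 2 * g * (c + p) by lia.
  have ob1 : odd (c + p.-1 + b) by rewrite eb; lia.
  have eb2 : c + (b + q.-1) + 2 * g * u = sg1 + 2 + 2 * g * (c + p + v) by lia.
  have ob2 : odd (c + (b + q.-1)) by lia.
  exists (mkseq (zts X Y c b p) (p + q)); split.
  - apply: (two_seg sg CX CY XY XYa) => //; first by rewrite p0.
    + by rewrite q0.
    + by rewrite GH // eb Hg // hs1.
    + rewrite GH // -(Hg u) // eb2 Hg; last by lia.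
      by rewrite (negbTE hs2).
  - by rewrite size_mkseq pq.
  - have := mem_mkseq_at (zts X Y c b p) (_ : 0 < p + q); rewrite /zts p0 addn0; apply; lia.
have ekn : k = n + m by lia.
set b := tau.+1.
have bZ : b.+1 <= m * b.+1 by rewrite leq_pmull; lia.
set Z := sg1 + 2 * m * b.+1 - b.
have eZ : b + Z = sg1 + 2 * m * b.+1 by lia.
set d := Z %% (2 * m).
have dZ : Z = Z %/ (2 * m) * (2 * m) + d by apply: divn_eq.
have od : odd d by rewrite odd_mod; [lia | lia].
have dm : d < 2 * m by rewrite ltn_pmod; lia.
have Hd : forall e, ~~ odd e -> H (b + d + e) = H (sg1 + e).
  move=> e oe; rewrite -(HpYm (Z %/ (2 * m))); last by lia.
  have -> : b + d + e + 2 * m * (Z %/ (2 * m)) = sg1 + e + 2 * m * b.+1 by lia.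
  by rewrite HpYm //; lia.
have Hd0 : H (b + d) = true by move: (Hd 0 isT); rewrite !addn0 hs1.
have Hd2 : H (b + d + 2) = false by rewrite Hd // (negbTE hs2).
have Htm : H (tau + 2 * m) = false by rewrite HpY // (negbTE ht1).
have dne : d != (2 * m).-1.
  apply/eqP => ed; move: Hd0; rewrite ed.
  have -> : b + (2 * m).-1 = tau + 2 * m by lia.
  by rewrite Htm.
exists (mkseq (zH X Y n b d.+1) (2 * n + 2 * m)); split.
- apply: (ham sg CX CY XY XYa).
  + rewrite /b /=; lia.
  + rewrite /=; lia.
  + apply/andP; split; lia.
  + rewrite GH; last by lia.
    have -> : 1 + b = tau + 2 by lia.
    by rewrite ht2.
  + rewrite GH; last by lia.
    have -> : 2 + (b + d.+1.-1) = b + d + 2 by lia.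
    by rewrite Hd2.
  + rewrite GH; last by lia.
    have -> : (2 * n).-1 + (b + d.+1) = b + d + 2 * n by lia.
    rewrite HpX Hd0; lia.
  + rewrite GH; last by lia.
    have -> : 0 + (b + (2 * m).-1) = tau + 2 * m by lia.
    by rewrite Htm.
- by rewrite size_mkseq ekn; lia.
- rewrite -(cyc_mod CX c).
  have cm : c %% (2 * n) < 2 * n by rewrite ltn_pmod; lia.
  case: (ltnP (c %% (2 * n)) 2) => c2.
    have := mem_mkseq_at (zH X Y n b d.+1) (_ : c %% (2 * n) < 2 * n + 2 * m).
    by rewrite /zH c2; apply; lia.
  have := mem_mkseq_at (zH X Y n b d.+1) (_ : c %% (2 * n) + d.+1 < 2 * n + 2 * m).
  rewrite /zH.
  have -> : (c %% (2 * n) + d.+1 < 2) = false by lia.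
  have -> : (c %% (2 * n) + d.+1 < 2 + d.+1) = false by lia.
  have -> : (c %% (2 * n) + d.+1 < 2 * n + d.+1) = true by lia.
  rewrite addnK; apply; lia.
Qed.

Lemma idx_of_alt (V : finType) (adj : rel V) (col : V -> V -> bool) (s : seq V) :
  simple_2ec_graph adj col -> alt_cycle adj col s ->
  exists n (X : nat -> V), [/\ cyc adj col n X, size s = 2 * n,
    (forall i, X i \in s) /\ (forall v, v \in s -> exists i, X i = v),
    (forall i, next s (X i) = X i.+1) &
    (forall i, prev s (X i) = X (i + (2 * n).-1))].
Proof.
move=> [_ [asym csym]] A.
have sn : s != [::] by case/and4P: A.
case: s sn A => [//|x0 s'] _ A.
set s := x0 :: s' in A *.
have [_ us ha hc] := (alt_cycle_nthP adj col s x0).1 A.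
set N := size s in ha hc *.
have N0 : 0 < N by [].
pose ec i := col (nth x0 s i) (nth x0 s (i.+1 %% N)).
have jm : forall i, i < N -> ((i + N.-1) %% N).+1 %% N = i.
  move=> i li; rewrite -addn1 modnDml -addnA addn1 prednK // modnDr modn_small //.
have alt : forall i, i < N -> ec ((i + N.-1) %% N) != ec i.
  by move=> i li; rewrite /ec jm //; apply: hc.
have ecP : forall i, i < N -> ec i = ec 0 (+) odd i.
  elim=> [|i IH] li; first by rewrite addbF.
  have := alt i.+1 li; rewrite addSn -addnS prednK // modnDr modn_small; last lia.
  rewrite IH; last lia.
  lia.
have eN : ~~ odd N.
  have := alt 0 N0; rewrite add0n modn_small; last lia.
  rewrite ecP; last lia.
  lia.
have N2 : N != 2.
  apply/negP => /eqP e.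
  have := ecP 1; rewrite e => /(_ isT).
  change (col (nth x0 s 1) (nth x0 s (2 %% N)) = col (nth x0 s 0) (nth x0 s (1 %% N)) (+) true -> False).
  rewrite e modnn modn_small // [col (nth x0 s 1) _]csym.
  by case: (col _ _).
have n2 : 1 < N./2 by lia.
set sh := (~~ ec 0 : nat).
pose X i := nth x0 s ((i + sh) %% N).
have eN2 : 2 * N./2 = N by lia.
have mN : forall i, (i + sh) %% N < N by move=> i; rewrite ltn_mod.
have XS : forall i, (((i + sh) %% N).+1 %% N) = (i.+1 + sh) %% N.
  by move=> i; rewrite -addn1 modnDml addn1 addSn.
exists N./2, X; split.
- split.
  + exact: n2.
  + by move=> i; rewrite /X eN2 -addnA [N + sh]addnC addnA modnDr.
  + move=> i j; rewrite /X eN2 => /eqP; rewrite nth_uniq // => /eqP.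
    by move/eqP; rewrite eqn_modDr => /eqP.
  + by move=> i; rewrite /X -XS; apply: ha.
  + move=> i; rewrite /X -XS; have E := ecP _ (mN i).
    change (ec ((i + sh) %% N) = ~~ odd i); rewrite E.
    rewrite odd_mod; last by apply/negbTE.
    rewrite /sh; case: (ec 0) => /=; lia.
- by rewrite eN2.
- split.
    by move=> i; rewrite /X mem_nth.
  move=> v vs; exists (index v s + (N - sh)); rewrite /X -addnA subnK; last first.
    by rewrite /sh; case: (ec 0).
  by rewrite modnDr modn_small ?index_mem // nth_index.
- by move=> i; rewrite /X next_nth_mod // XS.
- move=> i; rewrite /X prev_nth_mod // eN2 modnDml.
  by congr nth; congr modn; rewrite addnAC.
Qed.

Definition rrn N x := if odd x then x + N.-1 else x.+1.
Definition bbn N x := if odd x then x.+1 else x + N.-1.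

Lemma iter_rb a i t : iter t (fun x => rrn (2 * a.+1) (bbn (2 * a.+1) x)) i =
  if odd i then i + 2 * t else i + (4 * a + 2) * t.
Proof.
elim: t => [|t IH] /=; first by case: (odd i); rewrite muln0 addn0.
rewrite IH /rrn /bbn; case oi: (odd i).
  have -> : odd (i + 2 * t) by lia.
  have -> : odd (i + 2 * t).+1 = false by lia.
  lia.
have -> : odd (i + (4 * a + 2) * t) = false by lia.
have -> : odd (i + (4 * a + 2) * t + (2 * a.+1).-1) by lia.
lia.
Qed.

Lemma iter_br a i t : iter t (fun x => bbn (2 * a.+1) (rrn (2 * a.+1) x)) i =
  if odd i then i + (4 * a + 2) * t else i + 2 * t.
Proof.
elim: t => [|t IH] /=; first by case: (odd i); rewrite muln0 addn0.
rewrite IH /rrn /bbn; case oi: (odd i).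
  have -> : odd (i + (4 * a + 2) * t) by lia.
  have -> : odd (i + (4 * a + 2) * t + (2 * a.+1).-1) = false by lia.
  lia.
have -> : odd (i + 2 * t) = false by lia.
have -> : odd (i + 2 * t).+1 by lia.
lia.
Qed.

Lemma close_rb a b i : exists K,
  bbn (2 * a.+1) (iter (a * b + a + b) (fun x => rrn (2 * a.+1) (bbn (2 * a.+1) x)) i)
  = rrn (2 * a.+1) i + 2 * a.+1 * K.
Proof.
rewrite iter_rb /rrn /bbn; case oi: (odd i).
  have -> : odd (i + 2 * (a * b + a + b)) by lia.
  exists b; lia.
have -> : odd (i + (4 * a + 2) * (a * b + a + b)) = false by lia.
exists (2 * a * b + 2 * a + b); lia.
Qed.

Lemma close_br a b i : exists K,
  rrn (2 * a.+1) (iter (a * b + a + b) (fun x => bbn (2 * a.+1) (rrn (2 * a.+1) x)) i)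
  = bbn (2 * a.+1) i + 2 * a.+1 * K.
Proof.
rewrite iter_br /rrn /bbn; case oi: (odd i).
  have -> : odd (i + (4 * a + 2) * (a * b + a + b)) by lia.
  exists (2 * a * b + 2 * a + b); lia.
have -> : odd (i + 2 * (a * b + a + b)) = false by lia.
exists b; lia.
Qed.

Lemma anti_f (f : nat -> nat -> bool) a b :
  (forall i j t s, f (i + 2 * a.+1 * t) (j + 2 * b.+1 * s) = f i j) ->
  (forall i j, f i j -> ~~ f (rrn (2 * a.+1) i) (rrn (2 * b.+1) j)) ->
  (forall i j, ~~ f i j -> f (bbn (2 * a.+1) i) (bbn (2 * b.+1) j)) ->
  (forall i j, f (rrn (2 * a.+1) i) (rrn (2 * b.+1) j) = ~~ f i j) /\
  (forall i j, f (bbn (2 * a.+1) i) (bbn (2 * b.+1) j) = ~~ f i j).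
Proof.
move=> fp R1 R2; set T := a * b + a + b.
have eT : T = b * a + b + a by rewrite /T; lia.
split=> i j.
  case h: (f i j); first by apply/negbTE; apply: R1; rewrite h.
  have W : forall t, ~~ f (iter t (fun x => rrn (2 * a.+1) (bbn (2 * a.+1) x)) i)
                       (iter t (fun x => rrn (2 * b.+1) (bbn (2 * b.+1) x)) j).
    elim=> [|t IH] /=; first by rewrite h.
    by apply: R1; apply: R2.
  have := R2 _ _ (W T).
  have [K1 ->] := close_rb a b i.
  rewrite eT; have [K2 ->] := close_rb b a j.
  by rewrite fp.
case h: (f i j); last by apply: R2; rewrite h.
have W : forall t, f (iter t (fun x => bbn (2 * a.+1) (rrn (2 * a.+1) x)) i)
                     (iter t (fun x => bbn (2 * b.+1) (rrn (2 * b.+1) x)) j).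
  elim=> [|t IH] /=; first by rewrite h.
  by apply: R2; apply: R1.
have := R1 _ _ (W T).
have [K1 ->] := close_br a b i.
rewrite eT; have [K2 ->] := close_br b a j.
by rewrite fp => /negbTE.
Qed.

Lemma G_of_anti (f : nat -> nat -> bool) a b :
  (forall i j t s, f (i + 2 * a.+1 * t) (j + 2 * b.+1 * s) = f i j) ->
  (forall i j, f (rrn (2 * a.+1) i) (rrn (2 * b.+1) j) = ~~ f i j) ->
  (forall i j, f (bbn (2 * a.+1) i) (bbn (2 * b.+1) j) = ~~ f i j) ->
  (forall i j, ~~ odd (i + j) -> f i j.+1 (+) odd i = f i.+1 j (+) odd i.+1) /\
  (forall i j, ~~ odd (i + j) -> f i.+1 j.+1 (+) odd i.+1 = f i j (+) odd i).
Proof.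
move=> fp AR AB.
have fpj : forall i j, f i (j + 2 * b.+1) = f i j.
  by move=> i j; have := fp i j 0 1; rewrite muln0 addn0 muln1.
split=> i j e.
  case oi: (odd i).
    have := AB i j.+1; rewrite /bbn oi.
    have -> : odd j.+1 = false by lia.
    have -> : j.+1 + (2 * b.+1).-1 = j + 2 * b.+1 by lia.
    rewrite fpj => ->; lia.
  have := AR i j.+1; rewrite /rrn oi.
  have -> : odd j.+1 by lia.
  have -> : j.+1 + (2 * b.+1).-1 = j + 2 * b.+1 by lia.
  rewrite fpj => ->; lia.
case oi: (odd i).
  have := AB i j; rewrite /bbn oi.
  have -> : odd j by lia.
  move=> ->; lia.
have := AR i j; rewrite /rrn oi.
have -> : odd j = false by lia.
move=> ->; lia.
Qed.

Definition rv m j := (2 * m).-1 * j + 1.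

Lemma cyc_rev (V : finType) (adj : rel V) (col : V -> V -> bool) m Y :
  simple_2ec_graph adj col -> cyc adj col m Y ->
  [/\ cyc adj col m (fun j => Y (rv m j)),
      (forall c, Y (rv m (rv m c)) = Y c),
      (forall j, Y (rv m j.+1) = Y ((2 * m).-1 * j)) &
      (forall j, odd ((2 * m).-1 * j) = odd j)].
Proof.
move=> [_ [asym csym]] CY.
have m1 := cyc_n CY.
have e1 : (2 * m).-1 = 2 * m.-1 + 1 by lia.
have eS : forall j, Y (rv m j.+1) = Y ((2 * m).-1 * j).
  move=> j; rewrite /rv -[RHS](cyc_per CY); congr Y; rewrite e1; lia.
have po : forall j, odd ((2 * m).-1 * j) = odd j.
  move=> j; rewrite e1; lia.
split => //.
- split => //.
  + by move=> i; rewrite /rv -[RHS](cyc_perM CY _ (2 * m).-1); congr Y; rewrite e1; lia.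
  + move=> i j /(cyc_inj CY) /eqP e; apply/eqP.
    have h1 : rv m i + (i + j) = i * (2 * m) + j.+1 by rewrite /rv e1; lia.
    have h2 : rv m j + (i + j) = j * (2 * m) + i.+1 by rewrite /rv e1; lia.
    move: e; rewrite -(eqn_modDr (i + j)) h1 h2 !modnMDl.
    by rewrite -[j.+1]addn1 -[i.+1]addn1 eqn_modDr eq_sym.
  + move=> j; rewrite eS asym /rv addn1; exact: (cyc_adj CY).
  + move=> j; rewrite eS csym /rv addn1 (cyc_col CY) po; lia.
- move=> c; rewrite /rv -[in RHS](cyc_perM CY c (2 * m.-1 * c + 1)); congr Y.
  rewrite e1; lia.
Qed.

Lemma swapG (V : Type) (col : V -> V -> bool) (A B : nat -> V) :
  (forall x y, col x y = col y x) ->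
  (forall i j, ~~ odd (i + j) -> col (A i) (B j.+1) (+) odd i = col (A i.+1) (B j) (+) odd i.+1) ->
  (forall i j, ~~ odd (i + j) -> col (B i) (A j.+1) (+) odd i = col (B i.+1) (A j) (+) odd i.+1).
Proof.
move=> cs G i j e; rewrite !(cs (B _)).
have := G j i (_ : ~~ odd (j + i)); rewrite addnC => /(_ e).
lia.
Qed.

Lemma swapNC (V : Type) (col : V -> V -> bool) (A B : nat -> V) :
  (forall x y, col x y = col y x) ->
  (exists i j i' j', [/\ odd (i + j), odd (i' + j') &
     col (A i) (B j) (+) odd i != col (A i') (B j') (+) odd i']) ->
  (exists i j i' j', [/\ odd (i + j), odd (i' + j') &
     col (B i) (A j) (+) odd i != col (B i') (A j') (+) odd i']).
Proof.
move=> cs [i [j [i' [j' [o1 o2 ne]]]]].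
exists j, i, j', i'; rewrite !(cs (B _)); split; try lia.
Qed.

Lemma anti_f' (f : nat -> nat -> bool) a b : 0 < a -> 0 < b ->
  (forall i j t s, f (i + 2 * a * t) (j + 2 * b * s) = f i j) ->
  (forall i j, f i j -> ~~ f (rrn (2 * a) i) (rrn (2 * b) j)) ->
  (forall i j, ~~ f i j -> f (bbn (2 * a) i) (bbn (2 * b) j)) ->
  (forall i j, ~~ odd (i + j) -> f i j.+1 (+) odd i = f i.+1 j (+) odd i.+1) /\
  (forall i j, ~~ odd (i + j) -> f i.+1 j.+1 (+) odd i.+1 = f i j (+) odd i).
Proof.
case: a => [//|a]; case: b => [//|b] _ _ fp R1 R2.
have [AR AB] := anti_f fp R1 R2.
exact: G_of_anti fp AR AB.
Qed.

Lemma cnbr_X (V : finType) (adj : rel V) (col : V -> V -> bool) s n X c i :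
  cyc adj col n X -> (forall i, next s (X i) = X i.+1) ->
  (forall i, prev s (X i) = X (i + (2 * n).-1)) ->
  cnbr col s c (X i) = X (if c then rrn (2 * n) i else bbn (2 * n) i).
Proof.
move=> CX hn hp; rewrite /cnbr hn (cyc_col CX) hp /rrn /bbn.
by case: c; case: (odd i).
Qed.

Theorem theorem3p13 (V : finType) (adj : rel V) (col : V -> V -> bool)
    (C1 C2 : seq V) :
  simple_2ec_graph adj col ->
  [disjoint C1 & C2] ->
  (forall x : V, (x \in C1) || (x \in C2)) ->
  (forall u w, u \in C1 -> w \in C2 -> adj u w) ->
  alt_cycle adj col C1 -> alt_cycle adj col C2 ->
  ~ has_good_pair col C1 C2 ->
  (exists v, v \in C1 /\ non_singular col v C2) ->
  (exists v, v \in C2 /\ non_singular col v C1) ->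
  vertex_alt_pancyclic adj col.
Proof.
move=> sg disj cov XYadj A1 A2 ngp [v1 [v1C ns1]] [v2 [v2C ns2]].
have [_ [asym csym]] := sg.
have [n [X [CX sX [XinC XsurC] Xnext Xprev]]] := idx_of_alt sg A1.
have [m [Y [CY sY [YinC YsurC] Ynext Yprev]]] := idx_of_alt sg A2.
have n1 := cyc_n CX; have m1 := cyc_n CY.
have cardV : #|V| = 2 * n + 2 * m.
  rewrite cardE -sX -sY -size_cat; apply: perm_size; apply: uniq_perm.
  - exact: enum_uniq.
  - rewrite cat_uniq -disjoint_has disjoint_sym disj.
    by case/and4P: A1 => _ -> _ _; case/and4P: A2 => _ -> _ _.
  - by move=> x; rewrite mem_enum mem_cat cov.
have XY : forall i j, X i != Y j.
  move=> i j; apply/eqP => e; have := disjointFr disj (XinC i).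
  by rewrite e YinC.
have XYa : forall i j, adj (X i) (Y j) by move=> i j; apply: XYadj.
have YX : forall i j, Y i != X j by move=> i j; rewrite eq_sym.
have YXa : forall i j, adj (Y i) (X j) by move=> i j; rewrite asym.
pose f i j := col (X i) (Y j).
have fp : forall i j t s, f (i + 2 * n * t) (j + 2 * m * s) = f i j.
  by move=> i j t s; rewrite /f (cyc_perM CX) (cyc_perM CY).
have R1 : forall i j, f i j -> ~~ f (rrn (2 * n) i) (rrn (2 * m) j).
  move=> i j h; apply/negP => h'; apply: ngp; exists (X i), (Y j); split => //.
  rewrite -/(f i j) h (cnbr_X true i CX Xnext Xprev) (cnbr_X true j CY Ynext Yprev).
  exact: h'.
have R2 : forall i j, ~~ f i j -> f (bbn (2 * n) i) (bbn (2 * m) j).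
  move=> i j h; apply/negPn/negP => h'; apply: ngp; exists (X i), (Y j); split => //.
  rewrite -/(f i j) (negbTE h) (cnbr_X false i CX Xnext Xprev) (cnbr_X false j CY Ynext Yprev).
  exact: (negbTE h').
have n0 : 0 < n by apply: ltnW.
have m0 : 0 < m by apply: ltnW.
have [Godd Geven] := anti_f' n0 m0 fp R1 R2.
move=> v k k2 kV; rewrite cardV in kV.
have kb : 1 < k <= n + m by move: k2 kV; clear; lia.
have kb' : 1 < k <= m + n by rewrite addnC.
case: (classic (exists i j i' j', [/\ odd (i + j), odd (i' + j') &
     col (X i) (Y j) (+) odd i != col (X i') (Y j') (+) odd i'])) => NC.
  case/orP: (cov v) => vin.
    have [c <-] := XsurC v vin.
    exact: (core sg CX CY XY XYa Godd NC c kb).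
  have [c <-] := YsurC v vin.
  exact: (core sg CY CX YX YXa (swapG csym Godd) (swapNC csym NC) c kb').
have [CY' Yrr YS Ypar] := cyc_rev sg CY.
pose Y' j := Y (rv m j).
have XY' : forall i j, X i != Y' j by move=> i j; apply: XY.
have XYa' : forall i j, adj (X i) (Y' j) by move=> i j; apply: XYa.
have YX' : forall i j, Y' i != X j by move=> i j; rewrite eq_sym.
have YXa' : forall i j, adj (Y' i) (X j) by move=> i j; rewrite asym.
have Godd' : forall i j, ~~ odd (i + j) ->
    col (X i) (Y' j.+1) (+) odd i = col (X i.+1) (Y' j) (+) odd i.+1.
  move=> i j e; rewrite /Y' YS /rv addn1.
  have o : ~~ odd (i + (2 * m).-1 * j) by rewrite oddD Ypar -oddD.
  have h := Geven i _ o; rewrite /f in h.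
  by rewrite h.
have NC' : exists i j i' j', [/\ odd (i + j), odd (i' + j') &
     col (X i) (Y' j) (+) odd i != col (X i') (Y' j') (+) odd i'].
  apply: NNPP => NC'.
  pose c0 := col (X 1) (Y 0) (+) true.
  pose c1 := col (X 1) (Y' 0) (+) true.
  have E1 : forall i j, odd (i + j) -> col (X i) (Y j) (+) odd i = c0.
    move=> i j o; apply/eqP/negPn/negP => ne; apply: NC.
    by exists i, j, 1, 0; split.
  have E2 : forall i j, odd (i + j) -> col (X i) (Y' j) (+) odd i = c1.
    move=> i j o; apply/eqP/negPn/negP => ne; apply: NC'.
    by exists i, j, 1, 0; split.
  have E : forall i j, col (X i) (Y j) =
      (if odd (i + j) then c0 else c1) (+) odd i.
    move=> i j; case o: (odd (i + j)).
      by rewrite -(E1 i j o) addbK.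
    have := E2 i (rv m j); rewrite /Y' Yrr => h.
    have o' : odd (i + rv m j) by rewrite /rv addnA addn1 /= oddD Ypar -oddD o.
    by rewrite -(h o') addbK.
  case: ns1 => w1 [w2 [w1C w2C ne1]].
  case: ns2 => u1 [u2 [u1C u2C ne2]].
  have [i1 ei1] := XsurC v1 v1C.
  have [j1 ej1] := YsurC w1 w1C.
  have [j2 ej2] := YsurC w2 w2C.
  have [j3 ej3] := YsurC v2 v2C.
  have [i4 ei4] := XsurC u1 u1C.
  have [i5 ei5] := XsurC u2 u2C.
  move: ne1 ne2; rewrite -ei1 -ej1 -ej2 -ej3 -ei4 -ei5 !(csym (Y _)).
  case: (boolP (c1 == c0)) => [/eqP e|ne].
    by rewrite !E e !if_same eqxx.
  have c10 : c1 = ~~ c0 by move: ne; case: (c1); case: (c0).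
  have E' : forall i j, col (X i) (Y j) = c0 (+) ~~ odd j.
    move=> i j; rewrite E c10; case o: (odd (i + j)).
      have -> : odd i = ~~ odd j by move: o; rewrite oddD; case: (odd i); case: (odd j).
      by rewrite addbN.
    have -> : odd i = odd j by move: o; rewrite oddD; case: (odd i); case: (odd j).
    by rewrite addNb addbN.
  by rewrite !E' eqxx.
have Y'sur : forall w, w \in C2 -> exists c, Y' c = w.
  move=> w wC; have [c <-] := YsurC w wC; exists (rv m c); exact: Yrr.
case/orP: (cov v) => vin.
  have [c <-] := XsurC v vin.
  exact: (core sg CX CY' XY' XYa' Godd' NC' c kb).
have [c <-] := Y'sur v vin.
exact: (core sg CY' CX YX' YXa' (swapG csym Godd') (swapNC csym NC') c kb').
Qed.
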